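(* Let $K,N_\text{t}\ge1$, let $\mathbf{h}_1,\dots,\mathbf{h}_K\in\mathbb{C}^{N_\text{t}}$, let $\mathbf{H}\triangleq[\mathbf{h}_1,\dots,\mathbf{h}_K]\in\mathbb{C}^{N_\text{t}\times K}$ and let $\mathcal{S}\triangleq\mathrm{col}(\mathbf{H})$ be its column space. Let $\lambda\in[0,1]$, $T_w>0$, $\eta_{\mathrm{BS}}\in(0,1]$, $P_{w,0}>0$, $P_{w,\max}>0$, $a_{\max}>0$, $\beta_{\max}>0$, and for each $k$ let $u_k>0$ and $\chi_k\ge0$. Consider the problem (P2) \[ \underset{\mathbf{f}\in\mathbb{C}^{N_\text{t}}}{\text{minimize}}~F(\mathbf{f})\triangleq\lambda\frac{T_w}{\eta_{\mathrm{BS}}}P_{w,0}\|\mathbf{f}\|_2^2+(1-\lambda)\sum_{k=1}^K\frac{\chi_k}{|\mathbf{h}_k^{\mathsf H}\mathbf{f}|^2} \] subject to $|\mathbf{h}_k^{\mathsf H}\mathbf{f}|^2\ge u_k^2/\beta_{\max}^2$ for all $k$, $P_{w,0}\|\mathbf{f}\|_2^2\le P_{w,\max}$, and $|\mathbf{h}_k^{\mathsf H}\mathbf{f}|\le a_{\max}$ for all $k$. For any point $\mathbf{f}^{(i)}\in\mathbb{C}^{N_\text{t}}$, write $a_k^{(i)}=\mathbf{h}_k^{\mathsf H}\mathbf{f}^{(i)}$ and define the affine function \[ \underline{u}_k^{(i)}(\mathbf{f})\triangleq|a_k^{(i)}|^2+2\Re\{(a_k^{(i)})^\ast(\mathbf{h}_k^{\mathsf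 H}\mathbf{f}-a_k^{(i)})\}, \] and consider the subproblem (P2-SCA) \[ \underset{\mathbf{f}\in\mathbb{C}^{N_\text{t}}}{\text{minimize}}~\lambda\frac{T_w}{\eta_{\mathrm{BS}}}P_{w,0}\|\mathbf{f}\|_2^2+(1-\lambda)\sum_{k=1}^K\frac{\chi_k}{\underline{u}_k^{(i)}(\mathbf{f})} \] subject to $\underline{u}_k^{(i)}(\mathbf{f})\ge u_k^2/\beta_{\max}^2$ for all $k$, $P_{w,0}\|\mathbf{f}\|_2^2\le P_{w,\max}$, and $|\mathbf{h}_k^{\mathsf H}\mathbf{f}|\le a_{\max}$ for all $k$. Then: if (P2) is feasible, its minimum value is attained and at least one minimizer lies in $\mathcal{S}$. Moreover, for any $\mathbf{f}^{(i)}$, if (P2-SCA) is feasible, it has a minimizer in $\mathcal{S}$.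
   Context: $(\cdot)^{\mathsf H}$ denotes Hermitian transpose, $(\cdot)^\ast$ complex conjugate, $\Re\{\cdot\}$ real part, $\|\cdot\|_2$ the Euclidean norm. In the paper, $\chi_k=c_ku_k^2$ with $c_k>0$, $\mathbf{f}$ is the BS beamformer, and $\mathbf{f}^{(i)}$ is the current iterate of a successive convex approximation scheme. *)

(* Defs.v *)
From HB Require Import structures.
From mathcomp Require Import all_boot all_order all_algebra.
From mathcomp Require Import complex.
From mathcomp Require Import reals.
Set Implicit Arguments. Unset Strict Implicit. Unset Printing Implicit Defensive.
Import Order.TTheory GRing.Theory Num.Theory.
Local Open Scope ring_scope.

(* Vectors in C^Nt are column vectors 'cV[R[i]]_Nt,
   H is the Nt x K channel matrix whose k-th column is h_k. *)

Section Defs.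
Variable R : realType.
Local Notation C := (R[i]).

Definition sqmod (z : C) : R := complex.Re z ^+ 2 + complex.Im z ^+ 2.
Definition cmod (z : C) : R := Num.sqrt (sqmod z).

Variables (Nt K : nat).

Definition sqnorm (f : 'cV[C]_Nt) : R := \sum_(j < Nt) sqmod (f j 0).

Definition hHf (H : 'M[C]_(Nt, K)) (f : 'cV[C]_Nt) (k : 'I_K) : C :=
  \sum_(j < Nt) conjc (H j k) * f j 0.

Definition in_colspace (H : 'M[C]_(Nt, K)) (f : 'cV[C]_Nt) : Prop :=
  exists c : 'cV[C]_K, f = H *m c.

Definition is_minimizer (feas : 'cV[C]_Nt -> Prop) (obj : 'cV[C]_Nt -> R)
  (f : 'cV[C]_Nt) : Prop :=
  feas f /\ forall g, feas g -> obj f <= obj g.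

Variables (H : 'M[C]_(Nt, K)) (lam Tw eta Pw0 Pwmax amax betamax : R)
  (u chi : 'I_K -> R).

Definition F_P2 (f : 'cV[C]_Nt) : R :=
  lam * (Tw / eta) * Pw0 * sqnorm f
  + (1 - lam) * \sum_(k < K) chi k / sqmod (hHf H f k).

Definition feas_P2 (f : 'cV[C]_Nt) : Prop :=
  (forall k, sqmod (hHf H f k) >= u k ^+ 2 / betamax ^+ 2)
  /\ Pw0 * sqnorm f <= Pwmax
  /\ (forall k, cmod (hHf H f k) <= amax).

Definition ulow (fi : 'cV[C]_Nt) (f : 'cV[C]_Nt) (k : 'I_K) : R :=
  let a := hHf H fi k in
  sqmod a + 2 * complex.Re (conjc a * (hHf H f k - a)).

Definition F_SCA (fi : 'cV[C]_Nt) (f : 'cV[C]_Nt) : R :=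
  lam * (Tw / eta) * Pw0 * sqnorm f
  + (1 - lam) * \sum_(k < K) chi k / ulow fi f k.

Definition feas_SCA (fi : 'cV[C]_Nt) (f : 'cV[C]_Nt) : Prop :=
  (forall k, ulow fi f k >= u k ^+ 2 / betamax ^+ 2)
  /\ Pw0 * sqnorm f <= Pwmax
  /\ (forall k, cmod (hHf H f k) <= amax).

End Defs.

(* Main.v *)
Require Import Defs.
From HB Require Import structures.
From mathcomp Require Import all_boot all_order all_algebra.
From mathcomp Require Import complex.
From mathcomp Require Import reals.
From mathcomp Require Import lra.
From mathcomp Require Import all_classical all_analysis.
Import Order.TTheory GRing.Theory Num.Theory.
Import numFieldNormedType.Exports.
Local Open Scope ring_scope.
Local Open Scope classical_set_scope.
Local Notation Re := complex.Re.
Local Notation Im := complex.Im.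
Section S.
Variable R : realType.

Lemma ReMJ (h z : R[i]) : Re (conjc h * z) = Re h * Re z + Im h * Im z.
Proof. case: h => a b; case: z => c d /=. lra. Qed.
Lemma ImMJ (h z : R[i]) : Im (conjc h * z) = Re h * Im z - Im h * Re z.
Proof. case: h => a b; case: z => c d /=. lra. Qed.
Lemma ReM (h z : R[i]) : Re (h * z) = Re h * Re z - Im h * Im z.
Proof. case: h => a b; case: z => c d /=. lra. Qed.
Lemma ReD (x y : R[i]) : Re (x + y) = Re x + Re y.
Proof. by case: x => a b; case: y => c d. Qed.
Lemma ImD (x y : R[i]) : Im (x + y) = Im x + Im y.
Proof. by case: x => a b; case: y => c d. Qed.
Lemma ReB (x y : R[i]) : Re (x - y) = Re x - Re y.
Proof. by case: x => a b; case: y => c d. Qed.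
Lemma Re_sum n (F : 'I_n -> R[i]) : Re (\sum_(j < n) F j) = \sum_(j < n) Re (F j).
Proof. exact: (big_morph _ ReD). Qed.
Lemma Im_sum n (F : 'I_n -> R[i]) : Im (\sum_(j < n) F j) = \sum_(j < n) Im (F j).
Proof. exact: (big_morph _ ImD). Qed.
Lemma sqmodD (x y : R[i]) : sqmod (x + y) = sqmod x + sqmod y + 2 * Re (conjc x * y).
Proof. rewrite /sqmod ReD ImD ReMJ. lra. Qed.
Lemma mulJ (x : R[i]) : x * conjc x = (sqmod x)%:C%C.
Proof. case: x => a b. rewrite /sqmod /=. apply/eqP; rewrite eq_complex /=. apply/andP; split; apply/eqP; lra. Qed.
Lemma sqmod_ge0 (x : R[i]) : 0 <= sqmod x.
Proof. rewrite /sqmod. nra. Qed.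
Lemma sqmod_eq0 (x : R[i]) : sqmod x = 0 -> x = 0.
Proof. case: x => a b; rewrite /sqmod /= => h. have ha : a = 0 by nra. have hb : b = 0 by nra. by rewrite ha hb. Qed.
Lemma mx_self0 m n (v : 'M[R[i]]_(m, n)) : v *m (map_mx conjc v)^T = 0 -> v = 0.
Proof.
move=> h; apply/matrixP => i j; rewrite mxE.
have /matrixP /(_ i i) := h; rewrite !mxE.
under eq_bigr => k _ do rewrite !mxE mulJ.
rewrite -(rmorph_sum (real_complex R)) => /complexI /eqP.
rewrite psumr_eq0; last by move=> k _; exact: sqmod_ge0.
by move/allP/(_ j (mem_index_enum _))/implyP/(_ isT)/eqP/sqmod_eq0.
Qed.

Lemma ker_trivial Nt K (H : 'M[R[i]]_(Nt, K)) p (w : 'M[R[i]]_(p, K)) :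
  (w *m H^T) *m map_mx conjc H = 0 -> w *m H^T = 0.
Proof.
move=> h; apply: mx_self0.
rewrite map_mxM. rewrite -map_trmx trmx_mul trmxK mulmxA h mul0mx //.
Qed.

Lemma proj_ex Nt K (H : 'M[R[i]]_(Nt, K)) (f : 'cV_Nt) :
  exists c : 'cV_K, (map_mx conjc H)^T *m (H *m c) = (map_mx conjc H)^T *m f.
Proof.
set A := H^T; set B := map_mx conjc H.
have hcap : (A :&: kermx B)%MS = 0.
  have : (A :&: kermx B <= A)%MS := capmxSl _ _.
  case/submxP => w hw.
  apply/eqP; rewrite hw; apply/eqP; apply: ker_trivial.
  by apply/sub_kermxP; rewrite -hw capmxSr.
have hr : \rank (A *m B) = \rank B.
  have := mxrank_mul_ker A B; rewrite hcap mxrank0 addn0 => ->.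
  by rewrite /A /B mxrank_tr mxrank_map.
have hBAB : (B <= A *m B)%MS.
  by have := mxrank_leqif_sup (submxMl A B) => /eq_leqif <-; rewrite hr.
have : (f^T *m B <= A *m B)%MS := submx_trans (submxMl _ _) hBAB.
case/submxP => d hd.
exists d^T; rewrite mulmxA -[LHS]trmxK -[RHS]trmxK; congr trmx.
by rewrite !trmx_mul !trmxK hd mulmxA.
Qed.

Lemma cont_sum (T : topologicalType) n (F : 'I_n -> T -> R) x :
  (forall j, {for x, continuous (F j)}) ->
  {for x, continuous (fun y => \sum_(j < n) F j y)}.
Proof.
move=> h.
have : forall s : seq 'I_n, {for x, continuous (fun y => \sum_(j <- s) F j y)}.
  elim => [|a s IH].
    have -> : (fun y => \sum_(j <- [::]) F j y) = (fun=> 0) by apply/funext => y; rewrite big_nil.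
    exact: cst_continuous.
  have -> : (fun y => \sum_(j <- a :: s) F j y) = (fun y => F a y + \sum_(j <- s) F j y).
    by apply/funext => y; rewrite big_cons.
  exact: continuousD.
by apply.
Qed.
Variables (Nt K : nat) (H : 'M[R[i]]_(Nt, K)).
Definition phi (x : 'rV[R]_(Nt + Nt)) : 'cV[R[i]]_Nt :=
  \col_j (x ord0 (lshift Nt j) +i* x ord0 (rshift Nt j))%C.
Definition psi (f : 'cV[R[i]]_Nt) : 'rV[R]_(Nt + Nt) :=
  row_mx (\row_j Re (f j 0)) (\row_j Im (f j 0)).
Lemma phiE x j i : phi x j i = (x ord0 (lshift Nt j) +i* x ord0 (rshift Nt j))%C.
Proof. by rewrite mxE. Qed.
Lemma phiK f : phi (psi f) = f.
Proof.
apply/matrixP => j i; rewrite phiE /psi row_mxEl row_mxEr !mxE (ord1 i).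
by case: (f j 0).
Qed.
Lemma coordc i : continuous (fun x : 'rV[R]_(Nt + Nt) => x ord0 i).
Proof. exact: coord_continuous. Qed.
Lemma cont_ext (T : topologicalType) (f g : T -> R) x :
  (forall y, f y = g y) -> {for x, continuous g} -> {for x, continuous f}.
Proof. by move=> /funext ->. Qed.
Lemma reK_cont k : continuous (fun x => Re (hHf H (phi x) k)).
Proof.
have -> : (fun x => Re (hHf H (phi x) k)) = (fun y => \sum_(j < Nt) (Re (H j k) * y ord0 (lshift Nt j) + Im (H j k) * y ord0 (rshift Nt j))) by apply/funext => y; rewrite /hHf Re_sum; apply: eq_bigr => j _; rewrite ReMJ phiE.
move=> x; apply: cont_sum => j.
apply: continuousD; apply: continuousM; (try exact: cst_continuous); exact: coordc.
Qed.
Lemma imK_cont k : continuous (fun x => Im (hHf H (phi x) k)).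
Proof.
have -> : (fun x => Im (hHf H (phi x) k)) = (fun y => \sum_(j < Nt) (Re (H j k) * y ord0 (rshift Nt j) - Im (H j k) * y ord0 (lshift Nt j))) by apply/funext => y; rewrite /hHf Im_sum; apply: eq_bigr => j _; rewrite ImMJ phiE.
move=> x; apply: cont_sum => j.
apply: continuousB; apply: continuousM; (try exact: cst_continuous); exact: coordc.
Qed.
Lemma sqn_cont : continuous (fun x => sqnorm (phi x)).
Proof.
have -> : (fun x => sqnorm (phi x)) = (fun y => \sum_(j < Nt) (y ord0 (lshift Nt j) * y ord0 (lshift Nt j) + y ord0 (rshift Nt j) * y ord0 (rshift Nt j))) by apply/funext => y; rewrite /sqnorm; apply: eq_bigr => j _; rewrite phiE /sqmod /= !expr2.
move=> x; apply: cont_sum => j.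
apply: continuousD; apply: continuousM; exact: coordc.
Qed.
Lemma sqn_phi x : sqnorm (phi x) = \sum_(i < Nt + Nt) x ord0 i ^+ 2.
Proof.
rewrite big_split_ord /sqnorm /= -big_split /=; apply: eq_bigr => j _.
by rewrite phiE /sqmod.
Qed.
Lemma coord_le (x : 'rV[R]_(Nt + Nt)) i : x ord0 i ^+ 2 <= sqnorm (phi x).
Proof.
rewrite sqn_phi (bigD1 i) //= lerDl sumr_ge0 // => ? _; exact: sqr_ge0.
Qed.
Lemma closed_forall (T : topologicalType) (I : Type) (P : I -> set T) :
  (forall i, closed (P i)) -> closed [set x | forall i, P i x].
Proof.
move=> h.
have -> : [set x | forall i, P i x] = \bigcap_(i in setT) P i.
  by apply/seteqP; split => x /= hx i //; apply: hx.
by apply: closed_bigI => i _; exact: h.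
Qed.
Lemma closed_geF (T : topologicalType) (g : T -> R) a :
  continuous g -> closed [set x | a <= g x].
Proof. move=> cg. change (closed (g @^-1` [set r | a <= r])). apply: preimage_closed; [by move=> x _; exact: cg | exact: closed_ge]. Qed.
Lemma closed_leF (T : topologicalType) (g : T -> R) a :
  continuous g -> closed [set x | g x <= a].
Proof. move=> cg. change (closed (g @^-1` [set r | r <= a])). apply: preimage_closed; [by move=> x _; exact: cg | exact: closed_le]. Qed.
Lemma contD (T : topologicalType) (f g : T -> R) :
  continuous f -> continuous g -> continuous (fun x => f x + g x).
Proof.
move=> cf cg x.
have : {for x, continuous (fun y => f y + g y)} by apply: continuousD; [exact: cf | exact: cg].
done.
Qed.
Lemma contB (T : topologicalType) (f g : T -> R) :
  continuous f -> continuous g -> continuous (fun x => f x - g x).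
Proof.
move=> cf cg x.
have : {for x, continuous (fun y => f y - g y)} by apply: continuousB; [exact: cf | exact: cg].
done.
Qed.
Lemma contM (T : topologicalType) (f g : T -> R) :
  continuous f -> continuous g -> continuous (fun x => f x * g x).
Proof.
move=> cf cg x.
have : {for x, continuous (fun y => f y * g y)} by apply: continuousM; [exact: cf | exact: cg].
done.
Qed.
Lemma contC (T : topologicalType) (a : R) : continuous (fun _ : T => a).
Proof. exact: cst_continuous. Qed.
Lemma sqmodK_cont k : continuous (fun x => sqmod (hHf H (phi x) k)).
Proof.
have -> : (fun x => sqmod (hHf H (phi x) k)) = (fun x => Re (hHf H (phi x) k) * Re (hHf H (phi x) k) + Im (hHf H (phi x) k) * Im (hHf H (phi x) k)).
  by apply/funext => x; rewrite /sqmod !expr2.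
by apply: contD; apply: contM; (exact: reK_cont || exact: imK_cont).
Qed.
Lemma cmodK_cont k : continuous (fun x => cmod (hHf H (phi x) k)).
Proof.
move=> x; rewrite /cmod.
apply: continuous_comp; first exact: sqmodK_cont.
exact: sqrt_continuous.
Qed.

Lemma gen_min (D : 'I_K -> 'cV[R[i]]_Nt -> R)
  (cD : forall k, continuous (fun x => D k (phi x)))
  (c : 'I_K -> R) (hc : forall k, 0 < c k) (Pw0 Pwmax amax al be : R)
  (chi : 'I_K -> R) (hPw0 : 0 < Pw0) (hPwmax : 0 < Pwmax) :
  let feas := fun f => (forall k, c k <= D k f) /\ Pw0 * sqnorm f <= Pwmax
     /\ (forall k, cmod (hHf H f k) <= amax) in
  (exists f, feas f) -> exists f, feas f /\ forall g, feas g ->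
    al * sqnorm f + be * \sum_(k < K) chi k / D k f <=
    al * sqnorm g + be * \sum_(k < K) chi k / D k g.
Proof.
move=> feas [f0 hf0].
pose A := [set x | feas (phi x)].
pose G := fun x => al * sqnorm (phi x) + be * \sum_(k < K) chi k / D k (phi x).
have A0 : A !=set0 by exists (psi f0); rewrite /A /= phiK.
have cA : closed A.
  have -> : A = [set x | forall k, c k <= D k (phi x)] `&`
     ([set x | Pw0 * sqnorm (phi x) <= Pwmax] `&`
      [set x | forall k, cmod (hHf H (phi x) k) <= amax]) by [].
  apply: closedI; first by apply: closed_forall => k; apply: closed_geF.
  apply: closedI; last by apply: closed_forall => k; apply: closed_leF; exact: cmodK_cont.
  apply: closed_leF => x; apply: continuousM; [exact: cst_continuous | exact: sqn_cont].
have bA : bounded_set A.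
  exists (1 + Pwmax / Pw0); split; first exact: num_real.
  move=> M hM x [_ [hx _]].
  have hB : 0 < Pwmax / Pw0 by apply: divr_gt0.
  have hS : sqnorm (phi x) <= Pwmax / Pw0.
    by rewrite -(ler_pM2l hPw0) [X in _ <= X]mulrC divfK ?gt_eqF.
  change (mx_norm x <= M); rewrite mx_normrE.
  apply: bigmax_le => [|[a i] _]; first by lra.
  rewrite /= (ord1 a).
  have := coord_le x i.
  rewrite -real_normK ?num_real //.
  have := normr_ge0 (x ord0 i).
  move: (`|x ord0 i|) => t ht1 ht2.
  nra.
have cG : {within A, continuous G}.
  apply: continuous_in_subspaceT => x; rewrite inE => -[hxD _].
  suff : {for x, continuous G} by []. rewrite /G.
  apply: continuousD.
    apply: continuousM; [exact: cst_continuous | exact: sqn_cont].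
  apply: continuousM; first exact: cst_continuous.
  apply: cont_sum => k.
  apply: continuousM; first exact: cst_continuous.
  apply: continuousV; last exact: cD.
  by apply: lt0r_neq0; apply: lt_le_trans (hxD k).
have [x xA xmin] := EVT_min_rV A0 (bounded_closed_compact bA cA) cG.
rewrite inE in xA.
exists (phi x); split => // g hg.
have := xmin (psi g); rewrite /G phiK; apply; rewrite inE /A /= phiK //.
Qed.
Lemma ImB (x y : R[i]) : Im (x - y) = Im x - Im y.
Proof. by case: x => a b; case: y => c d. Qed.

Lemma hHf_mx f k : hHf H f k = ((map_mx conjc H)^T *m f) k 0.
Proof. by rewrite /hHf mxE; apply: eq_bigr => j _; rewrite !mxE. Qed.

Lemma pyth (g w : 'cV[R[i]]_Nt) : (map_mx conjc g)^T *m w = 0 ->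
  sqnorm (g + w) = sqnorm g + sqnorm w.
Proof.
move=> h; rewrite /sqnorm.
under eq_bigr => j _ do rewrite mxE sqmodD.
rewrite !big_split /= -mulr_sumr -Re_sum.
have -> : \sum_(j < Nt) (conjc (g j 0) * w j 0) = ((map_mx conjc g)^T *m w) 0 0.
  by rewrite mxE; apply: eq_bigr => j _; rewrite !mxE.
by rewrite h mxE /= mulr0 addr0.
Qed.

Lemma proj_good (f : 'cV[R[i]]_Nt) : exists g, in_colspace H g /\
  (forall k, hHf H g k = hHf H f k) /\ sqnorm g <= sqnorm f.
Proof.
have [c hc] := proj_ex _ _ H f.
exists (H *m c); split; first by exists c.
split; first by move=> k; rewrite !hHf_mx hc.
set g := H *m c.
have hw : (map_mx conjc H)^T *m (f - g) = 0 by rewrite mulmxBr hc subrr.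
have -> : f = g + (f - g) by rewrite addrC subrK.
rewrite pyth ?lerDl; first by rewrite sumr_ge0 // => j _; exact: sqmod_ge0.
by rewrite /g map_mxM trmx_mul -mulmxA hw mulmx0.
Qed.

Lemma gen_full (D : 'I_K -> 'cV[R[i]]_Nt -> R)
  (cD : forall k, continuous (fun x => D k (phi x)))
  (hD : forall f g, (forall k, hHf H f k = hHf H g k) -> forall k, D k f = D k g)
  (c : 'I_K -> R) (hc : forall k, 0 < c k) (Pw0 Pwmax amax al be : R)
  (chi : 'I_K -> R) (hPw0 : 0 < Pw0) (hPwmax : 0 < Pwmax) (hal : 0 <= al) :
  let feas := fun f => (forall k, c k <= D k f) /\ Pw0 * sqnorm f <= Pwmax
     /\ (forall k, cmod (hHf H f k) <= amax) in
  (exists f, feas f) -> exists f, (feas f /\ forall g, feas g ->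
    al * sqnorm f + be * \sum_(k < K) chi k / D k f <=
    al * sqnorm g + be * \sum_(k < K) chi k / D k g) /\ in_colspace H f.
Proof.
move=> feas hex.
have [f [[hf1 [hf2 hf3]] hmin]] := gen_min _ cD _ hc _ _ amax al be chi hPw0 hPwmax hex.
have [g [hgc [hgk hgn]]] := proj_good f.
have hDg := hD _ _ hgk.
exists g; split => //; split.
  split; first by move=> k; rewrite hDg.
  split; last by move=> k; rewrite hgk.
  by apply: le_trans hf2; rewrite ler_pM2l.
move=> h hh; apply: le_trans (hmin h hh).
have -> : \sum_(k < K) chi k / D k g = \sum_(k < K) chi k / D k f.
  by apply: eq_bigr => k _; rewrite hDg.
by rewrite lerD2r ler_wpM2l.
Qed.
Lemma ulow_cont fi k : continuous (fun x => ulow H fi (phi x) k).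
Proof.
pose a := hHf H fi k.
have -> : (fun x => ulow H fi (phi x) k) = (fun x => sqmod a + 2 * (Re a * (Re (hHf H (phi x) k) - Re a) + Im a * (Im (hHf H (phi x) k) - Im a))).
  by apply/funext => x; rewrite /ulow ReMJ ReB ImB.
apply: contD; first exact: contC.
apply: contM; first exact: contC.
apply: contD; (apply: contM; first exact: contC); (apply: contB; last exact: contC).
  exact: reK_cont.
exact: imK_cont.
Qed.
End S.

Theorem lemma2 (R : realType) (K Nt : nat) (hK : (0 < K)%N) (hNt : (0 < Nt)%N)
  (H : 'M[R[i]]_(Nt, K))
  (lam Tw eta Pw0 Pwmax amax betamax : R) (u chi : 'I_K -> R)
  (hlam0 : 0 <= lam) (hlam1 : lam <= 1) (hTw : 0 < Tw)
  (heta0 : 0 < eta) (heta1 : eta <= 1) (hPw0 : 0 < Pw0) (hPwmax : 0 < Pwmax)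
  (hamax : 0 < amax) (hbeta : 0 < betamax)
  (hu : forall k, 0 < u k) (hchi : forall k, 0 <= chi k) :
  ((exists f, feas_P2 H Pw0 Pwmax amax betamax u f) ->
   exists f, is_minimizer (feas_P2 H Pw0 Pwmax amax betamax u)
                          (F_P2 H lam Tw eta Pw0 chi) f
             /\ in_colspace H f)
  /\
  (forall fi : 'cV[R[i]]_Nt,
     (exists f, feas_SCA H Pw0 Pwmax amax betamax u fi f) ->
     exists f, is_minimizer (feas_SCA H Pw0 Pwmax amax betamax u fi)
                            (F_SCA H lam Tw eta Pw0 chi fi) f
               /\ in_colspace H f).
Proof.
have hc : forall k, 0 < u k ^+ 2 / betamax ^+ 2.
  by move=> k; apply: divr_gt0; apply: exprn_gt0.
have hal : 0 <= lam * (Tw / eta) * Pw0.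
  by apply: mulr_ge0; [apply: mulr_ge0 => //; apply: divr_ge0; apply: ltW | apply: ltW].
split.
  move=> hex.
  have G := (@gen_full R Nt K H (fun k f => sqmod (hHf H f k)) (@sqmodK_cont R Nt K H)
    (fun f g h k => congr1 (@sqmod R) (h k)) (fun k => u k ^+ 2 / betamax ^+ 2) hc
    Pw0 Pwmax amax (lam * (Tw / eta) * Pw0) (1 - lam) chi hPw0 hPwmax hal hex).
  exact G.
move=> fi hex.
have G := (@gen_full R Nt K H (fun k f => ulow H fi f k) (@ulow_cont R Nt K H fi)
  (fun f g h k => ltac:(by rewrite /ulow h)) (fun k => u k ^+ 2 / betamax ^+ 2) hc
  Pw0 Pwmax amax (lam * (Tw / eta) * Pw0) (1 - lam) chi hPw0 hPwmax hal hex).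
  exact G.
Qed.
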